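(* There is an absolute constant $C_3$ such that for all $p\in(0,0.1)$, with $q=-\log(1-p)$ and $B=\lfloor q^{-1}\log q^{-1}\rfloor$, every positive integer $a\le B$ satisfies $$e^{2g(aq)}\le \frac{C_3}{aq}\log q^{-1}.$$
   Context: $\beta(u)=\frac{u+\sqrt{u(4-3u)}}{2}$ and $g(z)=-\log\beta(1-e^{-z})$ for $z>0$. *)

(* Defs.v *)
From Stdlib Require Import Reals ZArith.
Open Scope R_scope.

Definition beta (u : R) : R := (u + sqrt (u * (4 - 3 * u))) / 2.

Definition g (z : R) : R := - ln (beta (1 - exp (- z))).

(* floor of a real number: Int_part x = up x - 1 is the floor. *)
Definition floorR (x : R) : Z := Int_part x.

(* Main.v *)
Require Import Defs.
From Stdlib Require Import Reals ZArith Lra Lia Psatz.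
Open Scope R_scope.

Lemma beta_sq (u : R) : 0 < u <= 1 -> u / 4 <= beta u * beta u /\ 0 < beta u.
Proof.
  intros [H0 H1]. unfold beta.
  assert (Hs : sqrt u <= sqrt (u * (4 - 3 * u))) by (apply sqrt_le_1_alt; nra).
  assert (Hp : 0 < sqrt u) by (apply sqrt_lt_R0; lra).
  assert (Hsq : sqrt u * sqrt u = u) by (apply sqrt_sqrt; lra).
  split; nra.
Qed.

Theorem lemma11 :
  exists C3 : R,
    forall p : R, 0 < p < 1 / 10 ->
      let q := - ln (1 - p) in
      let B := floorR (/ q * ln (/ q)) in
      forall a : nat, (1 <= a)%nat -> (Z.of_nat a <= B)%Z ->
        exp (2 * g (INR a * q)) <= C3 / (INR a * q) * ln (/ q).
Proof.
  exists 8. intros p Hp q B a Ha HB.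
  assert (Hq0 : 0 < q).
  { unfold q. assert (ln (1 - p) < ln 1) by (apply ln_increasing; lra). rewrite ln_1 in H. lra. }
  assert (Hq1 : q < 1/9).
  { unfold q.
    assert (H1 : 1 + 1/9 <= exp (1/9)) by apply exp_ineq1_le.
    assert (H2 : exp (- (1/9)) < 1 - p).
    { rewrite exp_Ropp. assert (/ exp (1/9) <= / (1 + 1/9)) by (apply Rinv_le_contravar; lra).
      assert (/ (1 + 1/9) = 9/10) by field. lra. }
    assert (ln (exp (- (1/9))) < ln (1 - p)) by (apply ln_increasing; [apply exp_pos|lra]).
    rewrite ln_exp in H. lra. }
  set (L := ln (/ q)).
  assert (HL : 1 <= L).
  { unfold L. assert (exp 1 <= 3) by apply exp_le_3.
    assert (9 <= / q). { apply (Rmult_le_reg_l q); [lra|]. rewrite Rinv_r by (apply Rgt_not_eq; lra); lra. }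
    assert (ln (exp 1) < ln (/ q)) by (apply ln_increasing; [apply exp_pos|lra]).
    rewrite ln_exp in H1. lra. }
  set (z := INR a * q).
  assert (Ha1 : 1 <= INR a) by (apply (le_INR 1); lia).
  assert (Hz0 : 0 < z) by (unfold z; nra).
  assert (HzL : z <= L).
  { unfold z. destruct (base_Int_part (/ q * L)) as [Hb _].
    assert (INR a <= / q * L).
    { rewrite INR_IZR_INZ. eapply Rle_trans; [|exact Hb].
      apply IZR_le. exact HB. }
    assert (INR a * q <= / q * L * q) by nra.
    replace (/ q * L * q) with L in H0 by (field; lra). exact H0. }
  set (u := 1 - exp (- z)).
  assert (Hez : 1 + z <= exp z) by (apply exp_ineq1_le).
  assert (Hu0 : z / (1 + z) <= u /\ u <= 1).
  { unfold u. rewrite exp_Ropp. split.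
    - assert (/ exp z <= / (1 + z)) by (apply Rinv_le_contravar; lra).
      assert (1 - / (1 + z) = z / (1 + z)) by (field; lra). lra.
    - assert (0 < / exp z) by (apply Rinv_0_lt_compat, exp_pos). lra. }
  assert (Hzz : 0 < z / (1 + z)) by (apply Rdiv_lt_0_compat; lra).
  destruct (beta_sq u) as [Hb Hbp]; [lra|].
  unfold g. fold z. fold u.
  replace (2 * - ln (beta u)) with (- (ln (beta u) + ln (beta u))) by ring.
  rewrite exp_Ropp, exp_plus, exp_ln by exact Hbp.
  assert (Hu4 : z / (1 + z) / 4 <= beta u * beta u) by lra.
  assert (/ (beta u * beta u) <= / (z / (1 + z) / 4)).
  { apply Rinv_le_contravar; [lra|exact Hu4]. }
  assert (/ (z / (1 + z) / 4) = 4 * (1 + z) / z) by (field; lra).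
  assert (4 * (1 + z) / z <= 8 / z * L).
  { unfold Rdiv. apply (Rmult_le_reg_r z); [lra|].
    replace (4 * (1 + z) * / z * z) with (4 * (1 + z)) by (field; lra).
    replace (8 * / z * L * z) with (8 * L) by (field; lra). lra. }
  lra.
Qed.
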